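(* Let $(G,* )$ be a topological group satisfying ${\sf S}_c(\mathcal{O}_{\sf nbd},\mathcal{O})$ and let $(H,* )$ be a topological group satisfying ${\sf S}_c(\mathcal{O}_{\sf nbd},\mathcal{O}^{cgp})$. Then the product group $G\times H$ satisfies ${\sf S}_c(\mathcal{O}_{\sf nbd},\mathcal{O})$.
   Context: For a topological group $(G,* )$ with identity $e$ and a neighborhood $U$ of $e$, $\mathcal{O}(U)=\{x*U:x\in G\}$ and $\mathcal{O}_{\sf nbd}=\{\mathcal{O}(U):U\text{ a neighborhood of }e\}$. $\mathcal{O}$ is the collection of all open covers. An open cover $\mathcal{U}$ is c-groupable if there is a partition $\mathcal{U}=\bigcup_{n<\infty}\mathcal{U}_n$ where each $\mathcal{U}_n$ is pairwise disjoint and each point lies in all but finitely many of the sets $\bigcup\mathcal{U}_n$; $\mathcal{O}^{cgp}$ denotes the collection of c-groupable open covers. A family $\mathcal{B}$ refines $\mathcal{A}$ if every member of $\mathcal{B}$ is contained in some member of $\mathcal{A}$. ${\sf S}_c(\mathcal{A},\mathcal{B})$: for each sequence $(A_n:n<\infty)$ of elements of $\mathcal{A}$ there is a sequence $(B_n:n<\infty)$ such that each $B_n$ is a pairwise disjoint family of open sets refining $A_n$ and $\bigcup_nB_n\in\mathcal{B}$. *)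

(* Defs.v *)
From Stdlib Require Import Arith.

Set Implicit Arguments.

Definition is_topology (T : Type) (open : (T -> Prop) -> Prop) : Prop :=
  open (fun _ => True) /\
  (forall F : (T -> Prop) -> Prop,
      (forall A, F A -> open A) -> open (fun x => exists A, F A /\ A x)) /\
  (forall A B, open A -> open B -> open (fun x => A x /\ B x)).

Definition prod_open (T1 T2 : Type) (open1 : (T1 -> Prop) -> Prop)
  (open2 : (T2 -> Prop) -> Prop) (W : T1 * T2 -> Prop) : Prop :=
  forall p, W p -> exists U V, open1 U /\ open2 V /\ U (fst p) /\ V (snd p) /\
    (forall a b, U a -> V b -> W (a, b)).

Definition continuous (X Y : Type) (openX : (X -> Prop) -> Prop)
  (openY : (Y -> Prop) -> Prop) (f : X -> Y) : Prop :=
  forall V, openY V -> openX (fun x => V (f x)).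

Definition is_group (G : Type) (op : G -> G -> G) (inv : G -> G) (e : G) : Prop :=
  (forall x y z, op x (op y z) = op (op x y) z) /\
  (forall x, op e x = x) /\ (forall x, op x e = x) /\
  (forall x, op (inv x) x = e) /\ (forall x, op x (inv x) = e).

Definition is_topological_group (G : Type) (op : G -> G -> G) (inv : G -> G)
  (e : G) (open : (G -> Prop) -> Prop) : Prop :=
  is_topology open /\ is_group op inv e /\
  continuous (prod_open open open) open (fun p => op (fst p) (snd p)) /\
  continuous open open inv.

Definition prod_op (G H : Type) (opG : G -> G -> G) (opH : H -> H -> H)
  (p q : G * H) : G * H := (opG (fst p) (fst q), opH (snd p) (snd q)).
Definition prod_inv (G H : Type) (invG : G -> G) (invH : H -> H) (p : G * H)
  : G * H := (invG (fst p), invH (snd p)).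

Definition nbd_e (G : Type) (open : (G -> Prop) -> Prop) (e : G) (U : G -> Prop)
  : Prop := open U /\ U e.

Definition lcoset (G : Type) (op : G -> G -> G) (x : G) (U : G -> Prop) : G -> Prop :=
  fun y => exists u, U u /\ y = op x u.

Definition OU (G : Type) (op : G -> G -> G) (U : G -> Prop) : (G -> Prop) -> Prop :=
  fun V => exists x, V = lcoset op x U.

Definition O_nbd (G : Type) (op : G -> G -> G) (e : G) (open : (G -> Prop) -> Prop)
  : ((G -> Prop) -> Prop) -> Prop :=
  fun F => exists U, nbd_e open e U /\ F = OU op U.

Definition open_cover (T : Type) (open : (T -> Prop) -> Prop)
  (F : (T -> Prop) -> Prop) : Prop :=
  (forall A, F A -> open A) /\ (forall x, exists A, F A /\ A x).

Definition disjoint_sets (T : Type) (A B : T -> Prop) : Prop :=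
  forall x, A x -> B x -> False.

Definition pairwise_disjoint (T : Type) (F : (T -> Prop) -> Prop) : Prop :=
  forall A B, F A -> F B -> A <> B -> disjoint_sets A B.

Definition cgroupable_open_cover (T : Type) (open : (T -> Prop) -> Prop)
  (F : (T -> Prop) -> Prop) : Prop :=
  open_cover open F /\
  exists P : nat -> (T -> Prop) -> Prop,
    (forall A, F A <-> exists n, P n A) /\
    (forall n m A, P n A -> P m A -> n = m) /\
    (forall n, pairwise_disjoint (P n)) /\
    (forall x, exists N, forall n, N <= n -> exists A, P n A /\ A x).

Definition refines (T : Type) (B A : (T -> Prop) -> Prop) : Prop :=
  forall V, B V -> exists W, A W /\ (forall x, V x -> W x).

Definition S_c (T : Type) (open : (T -> Prop) -> Prop)
  (CA CB : ((T -> Prop) -> Prop) -> Prop) : Prop :=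
  forall A : nat -> (T -> Prop) -> Prop, (forall n, CA (A n)) ->
  exists B : nat -> (T -> Prop) -> Prop,
    (forall n, pairwise_disjoint (B n) /\ (forall V, B n V -> open V) /\
               refines (B n) (A n)) /\
    CB (fun V => exists n, B n V).

(* Main.v *)
Require Import Defs.
From Stdlib Require Import List Arith Lia Cantor Classical ClassicalEpsilon.

Lemma pigeon (f : nat -> nat) (a d : nat) :
  (forall k1 k2, a <= k1 <= a + d -> a <= k2 <= a + d -> f k1 = f k2 -> k1 = k2) ->
  exists x, x <= d /\ d <= f (a + x).
Proof.
  intros Hinj. apply NNPP; intro Hn.
  assert (Hlt : forall x, x <= d -> f (a + x) < d).
  { intros x Hx. destruct (le_lt_dec d (f (a+x))); [exfalso; apply Hn; eauto|]. exact l. }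
  assert (HN : NoDup (map (fun x => f (a + x)) (seq 0 (S d)))).
  { apply NoDup_map_NoDup_ForallPairs; [|apply seq_NoDup].
    intros x y Hx Hy E. apply in_seq in Hx. apply in_seq in Hy.
    assert (a + x = a + y) by (apply Hinj; [lia|lia|exact E]). lia. }
  assert (HI : incl (map (fun x => f (a + x)) (seq 0 (S d))) (seq 0 d)).
  { intros z Hz. apply in_map_iff in Hz. destruct Hz as [x [<- Hx]].
    apply in_seq in Hx. apply in_seq. specialize (Hlt x). lia. }
  pose proof (NoDup_incl_length HN HI) as L.
  rewrite length_map, !length_seq in L. lia.
Qed.

Definition beta (d : nat) : nat := (d + 1) * (d + 1).

Lemma beta_mono m n : m <= n -> beta m <= beta n.
Proof. unfold beta; intros; nia. Qed.

Lemma to_nat_le x y : to_nat (x, y) <= beta (x + y).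
Proof. pose proof (to_nat_spec x y). unfold beta. nia. Qed.

Lemma choice_fun {A B : Type} (P : A -> B -> Prop) :
  (forall a, exists b, P a b) -> exists f : A -> B, forall a, P a (f a).
Proof.
  intros Hx. exists (fun a => proj1_sig (constructive_indefinite_description _ (Hx a))).
  intro a. exact (proj2_sig (constructive_indefinite_description _ (Hx a))).
Qed.

Fixpoint decr {T : Type} (U : nat -> T -> Prop) (n : nat) : T -> Prop :=
  match n with
  | 0 => U 0
  | S n => fun x => decr U n x /\ U (S n) x
  end.

Lemma decr_le {T : Type} (U : nat -> T -> Prop) n m x : m <= n -> decr U n x -> U m x.
Proof.
  induction n; intros Hm Hd.
  - replace m with 0 by lia. exact Hd.
  - destruct Hd as [Hd Hu]. destruct (Nat.eq_dec m (S n)) as [->|]; auto.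
    apply IHn; auto; lia.
Qed.

Lemma decr_open {T : Type} (open : (T -> Prop) -> Prop) (U : nat -> T -> Prop) e :
  is_topology open -> (forall n, open (U n) /\ U n e) -> forall n, open (decr U n) /\ decr U n e.
Proof.
  intros [_ [_ Hi]] HU n. induction n; simpl.
  - apply HU.
  - destruct IHn. destruct (HU (S n)). split; auto.
Qed.

Theorem theorem3p1
  (G : Type) (opG : G -> G -> G) (invG : G -> G) (eG : G)
  (openG : (G -> Prop) -> Prop)
  (H : Type) (opH : H -> H -> H) (invH : H -> H) (eH : H)
  (openH : (H -> Prop) -> Prop) :
  is_topological_group opG invG eG openG ->
  is_topological_group opH invH eH openH ->
  S_c openG (O_nbd opG eG openG) (open_cover openG) ->
  S_c openH (O_nbd opH eH openH) (cgroupable_open_cover openH) ->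
  S_c (prod_open openG openH)
      (O_nbd (prod_op opG opH) (eG, eH) (prod_open openG openH))
      (open_cover (prod_open openG openH)).
Proof.
  intros TG TH SG SH A HA.
  destruct TG as [topG _]. destruct TH as [topH _].
  destruct (choice_fun (fun n W => nbd_e (prod_open openG openH) (eG,eH) W
              /\ A n = OU (prod_op opG opH) W)) as [W HW].
  { intro n. destruct (HA n) as [W0 [h1 h2]]. eauto. }
  destruct (choice_fun (fun n (UV : (G->Prop)*(H->Prop)) =>
     openG (fst UV) /\ openH (snd UV) /\ fst UV eG /\ snd UV eH /\
     forall a b, fst UV a -> snd UV b -> W n (a,b))) as [UV HUV].
  { intro n. destruct (HW n) as [[Wo We] _].
    destruct (Wo _ We) as [U0 [V0 [h1 [h2 [h3 [h4 h5]]]]]].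
    exists (U0,V0). simpl. auto. }
  set (U := fun n => fst (UV n)). set (V := fun n => snd (UV n)).
  assert (HUd : forall n, openG (decr U n) /\ decr U n eG).
  { apply decr_open; [exact topG|]. intro n. unfold U. destruct (HUV n) as [? [? [? [? ?]]]]. auto. }
  assert (HVd : forall n, openH (decr V n) /\ decr V n eH).
  { apply decr_open; [exact topH|]. intro n. unfold V. destruct (HUV n) as [? [? [? [? ?]]]]. auto. }
  assert (HGj : forall j, exists D : nat -> (G->Prop)->Prop,
     (forall r, pairwise_disjoint (D r) /\ (forall V0, D r V0 -> openG V0) /\
        refines (D r) (OU opG (decr U (beta (to_nat (j,r)))))) /\
     open_cover openG (fun V0 => exists r, D r V0)).
  { intro j. apply SG. intro r. exists (decr U (beta (to_nat (j,r)))).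
    split; [apply HUd|reflexivity]. }
  destruct (choice_fun _ HGj) as [Dj HDj].
  destruct (SH (fun n => OU opH (decr V (beta n)))) as [C [HC Hcgp]].
  { intro n. exists (decr V (beta n)). split; [apply HVd|reflexivity]. }
  destruct Hcgp as [Hcov [P [HP1 [HP2 [HP3 HP4]]]]].
  set (Dfam := fun d => Dj (fst (of_nat d)) (snd (of_nat d))).
  set (E := fun k t (C' : H -> Prop) => P k C' /\ exists n, t <= beta n /\ C n C').
  set (B := fun p (R : G * H -> Prop) => exists D C', Dfam (fst (of_nat p) + snd (of_nat p)) D /\
        E (fst (of_nat p) + snd (of_nat p) + fst (of_nat p)) p C' /\
        R = (fun q => D (fst q) /\ C' (snd q))).
  assert (Hall : forall p, pairwise_disjoint (B p) /\ (forall V0, B p V0 -> prod_open openG openH V0)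
                  /\ refines (B p) (A p)).
  { intro p. split; [|split].
    - intros R1 R2 [D1 [C1 [hD1 [hC1 ->]]]] [D2 [C2 [hD2 [hC2 ->]]]] Hne [a b] [h1 h2] [h3 h4].
      simpl in *.
      unfold Dfam in hD1, hD2.
      destruct (proj1 (HDj (fst (of_nat (fst (of_nat p) + snd (of_nat p)))))
                  (snd (of_nat (fst (of_nat p) + snd (of_nat p))))) as [Hdis _].
      destruct (classic (D1 = D2)) as [<-|nD]; [|exact (Hdis _ _ hD1 hD2 nD a h1 h3)].
      destruct hC1 as [hP1 _]. destruct hC2 as [hP2 _].
      destruct (classic (C1 = C2)) as [<-|nC]; [exact (Hne eq_refl)|].
      exact (HP3 _ _ _ hP1 hP2 nC b h2 h4).
    - intros R [D [C' [hD [[hP [n [hn hCn]]] ->]]]] [a b] [ha hb].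
      exists D, C'. unfold Dfam in hD.
      destruct (proj1 (HDj (fst (of_nat (fst (of_nat p) + snd (of_nat p)))))
                  (snd (of_nat (fst (of_nat p) + snd (of_nat p))))) as [_ [Hop _]].
      destruct (HC n) as [_ [HopC _]].
      repeat split; auto.
    - intros R [D [C' [hD [[hP [n [hn hCn]]] ->]]]].
      unfold Dfam in hD.
      destruct (proj1 (HDj (fst (of_nat (fst (of_nat p) + snd (of_nat p)))))
                  (snd (of_nat (fst (of_nat p) + snd (of_nat p))))) as [_ [_ Href]].
      rewrite <- surjective_pairing, cancel_to_of in Href.
      destruct (Href D hD) as [W0 [[x0 ->] HsubD]].
      destruct (HC n) as [_ [_ HrefC]].
      destruct (HrefC C' hCn) as [W1 [[y0 ->] HsubC]].
      exists (lcoset (prod_op opG opH) (x0,y0) (W p)). split.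
      + rewrite (proj2 (HW p)). exists (x0,y0). reflexivity.
      + intros [a b] [ha hb]. simpl in ha, hb.
        destruct (HsubD a ha) as [u [hu ->]]. destruct (HsubC b hb) as [v [hv ->]].
        exists (u,v). split; [|reflexivity].
        destruct (HUV p) as [_ [_ [_ [_ Hrect]]]]. apply Hrect.
        * apply (decr_le U (beta (fst (of_nat p) + snd (of_nat p)))); [|exact hu].
          pose proof (to_nat_le (fst (of_nat p)) (snd (of_nat p))) as T.
          rewrite <- surjective_pairing, cancel_to_of in T. exact T.
        * apply (decr_le V (beta n)); [exact hn|exact hv]. }
  exists B. split; [exact Hall|]. split.
  - intros R [p hR]. exact (proj1 (proj2 (Hall p)) R hR).
  - intros [a b].
    destruct (HP4 b) as [N HN].
    destruct (choice_fun (fun k (Mn : (H->Prop)*nat) =>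
        N <= k -> P k (fst Mn) /\ fst Mn b /\ C (snd Mn) (fst Mn))) as [Mn HMn].
    { intro k. destruct (le_lt_dec N k) as [hk|hk].
      - destruct (HN k hk) as [M [hM hMb]].
        destruct (proj2 (HP1 M) (ex_intro _ k hM)) as [n hn].
        exists (M, n). simpl. auto.
      - exists ((fun _ => False), 0). intros; lia. }
    destruct (proj2 (proj2 (HDj N)) a) as [A0 [[r hA0] ha]].
    set (d := to_nat (N, r)).
    assert (Hd : N <= d) by (pose proof (to_nat_non_decreasing N r); unfold d; lia).
    destruct (pigeon (fun k => snd (Mn k)) d d) as [x [hx hnf]].
    { intros k1 k2 h1 h2 Heq.
      destruct (HMn k1) as [hP1 [hb1 hC1]]; [lia|].
      destruct (HMn k2) as [hP2 [hb2 hC2]]; [lia|].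
      simpl in Heq. rewrite Heq in hC1.
      destruct (classic (fst (Mn k1) = fst (Mn k2))) as [Hq|Hq].
      - rewrite Hq in hP1. exact (HP2 _ _ _ hP1 hP2).
      - exfalso. exact (proj1 (HC _) _ _ hC1 hC2 Hq b hb1 hb2). }
    set (y := d - x).
    destruct (HMn (d + x)) as [hP [hb hC]]; [lia|].
    exists (fun q => A0 (fst q) /\ fst (Mn (d + x)) (snd q)). split; [|simpl; auto].
    exists (to_nat (x, y)). exists A0, (fst (Mn (d + x))).
    rewrite cancel_of_to. simpl.
    assert (Exy : x + y = d) by (unfold y; lia).
    rewrite Exy. split; [|split; [|reflexivity]].
    + unfold Dfam, d. rewrite cancel_of_to. simpl. exact hA0.
    + split; [exact hP|]. exists (snd (Mn (d + x))). split; [|exact hC].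
      pose proof (to_nat_le x y) as T. rewrite Exy in T.
      pose proof (beta_mono _ _ hnf). exact (Nat.le_trans _ _ _ T H0).
Qed.
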